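(* Fix a calendar time $t$ and a cutoff $T^*>0$. Assume (Adjusted Assumption 1) $\phi(u)=\beta_{T^*}$ for all $u\ge T^*$, for some constant $\beta_{T^*}$; and (Adjusted Assumption 2) $f_t(t-u)=f_t(t)$ for all $u\in[0,T^*]$, where $f_t(s)$ is the conditional density at $s$ of $T$ given $\{T\le t,A(t)=1\}$. Let $\Omega_{T^*}=\int_0^{T^*}\phi(u)\,du$ and assume $\Omega_{T^*}-\beta_{T^*}T^*\neq0$, $p(t)<1$, and $p$ continuous. Then $$P_{rec}(t)=(\Omega_{T^*}-\beta_{T^*}T^* )\,\lambda(t)\{1-p(t)\}+p(t)\beta_{T^*},\qquad\text{i.e.}\qquad \lambda(t)=\frac{P_{rec}(t)-\beta_{T^*}p(t)}{\{1-p(t)\}(\Omega_{T^*}-\beta_{T^*}T^* )}.$$ (Consequently the adjusted estimator $\tilde\lambda=(N_{rec}-N_{pos}\hat\beta_{T^*})/\{N_{neg}(\hat\Omega_{T^*}-\hat\beta_{T^*}T^* )\}$ is the plug-in estimator of $\lambda(t)$.)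
   Context: $T$ is the (calendar) HIV infection time of a subject, a random variable with densities as needed; $A(t)\in\{0,1\}$ indicates eligibility for the target population at calendar time $t$. Prevalence: $p(t)=\Pr(T\le t\mid A(t)=1)$. Incidence: $\lambda(t)=\lim_{dt\to0}\frac1{dt}\Pr(t\le T<t+dt\mid T\ge t, A(t)=1)$. $M$ is the biomarker value of a recency test and $\mathcal R$ a fixed ''test-recent'' region. $\phi(u)=\Pr(M\in\mathcal R\mid T=t-u, A(t)=1)$ for $u\ge0$, assumed not to depend on $t$. $P_{rec}(t)=\Pr(M\in\mathcal R, T\le t\mid A(t)=1)$. $\Omega_{T^*}$ is the mean duration of recent infection (MDRI), $\beta_{T^*}$ the false-recent rate (FRR). $N_{rec},N_{pos},N_{neg}$ are the numbers of test-recent, HIV-positive and HIV-negative subjects in a random sample from the population eligible at $t$; hats denote estimates. *)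

(* Defs.v *)
From HB Require Import structures.
From mathcomp Require Import all_boot all_order all_algebra.
From mathcomp Require Import all_classical all_reals all_analysis.
Set Implicit Arguments. Unset Strict Implicit. Unset Printing Implicit Defensive.
Import Order.TTheory GRing.Theory Num.Theory.
Import numFieldNormedType.Exports.
Local Open Scope classical_set_scope.
Local Open Scope ring_scope.

Definition cprob {R : realType} {d} {Om : measurableType d}
  (P : probability Om R) (E F : set Om) : R :=
  fine (P (E `&` F)) / fine (P F).

Section defs.
Context {R : realType} {d : measure_display} {Om : measurableType d}.
Variables (P : probability Om R) (T : Om -> R) (A : R -> set Om).

Definition prevalence (s : R) : R := cprob P (T @^-1` `]-oo, s]) (A s).

(* P_rec(t) = Pr(M in R_rec, T <= t | A(t) = 1); Rec is the event M in R_rec *)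
Definition Prec (Rec : set Om) (t : R) : R :=
  cprob P (Rec `&` T @^-1` `]-oo, t]) (A t).

Definition hazard_quot (t dt : R) : R :=
  dt^-1 * cprob P (T @^-1` `[t, t + dt[) (T @^-1` `[t, +oo[ `&` A t).

Definition is_incidence (t lam : R) : Prop :=
  hazard_quot t @ 0^'+ --> lam.

Definition is_cond_density (t : R) (g : R -> R) : Prop :=
  (forall s, 0 <= g s) /\ measurable_fun setT g /\
  lebesgue_measure.-integrable setT (EFin \o g) /\
  forall B : set R, measurable B ->
    cprob P (T @^-1` B) (A t) = Rintegral lebesgue_measure B g.

(* phi(u) = Pr(M in R_rec | T = t - u, A(t) = 1), u >= 0, as a (version of the)
   regular conditional probability: a measurable [0,1]-valued function such
   that Pr(Rec, T in B | A(t)=1) = int_B phi(t - s) g(s) ds for B <= ]-oo,t]. *)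
Definition is_recency_fn (t : R) (g : R -> R) (Rec : set Om) (phi : R -> R)
  : Prop :=
  measurable_fun setT phi /\ (forall u, 0 <= u -> 0 <= phi u <= 1) /\
  forall B : set R, measurable B -> B `<=` `]-oo, t] ->
    cprob P (Rec `&` T @^-1` B) (A t)
    = Rintegral lebesgue_measure B (fun s => phi (t - s) * g s).

(* f_t(s): conditional density of T given T <= t, A(t) = 1, i.e. g(s)/p(t)
   for s <= t (and 0 for s > t). *)
Definition cond_density_le (t : R) (g : R -> R) (s : R) : R :=
  if s <= t then g s / prevalence t else 0.

End defs.

Definition MDRI {R : realType} (phi : R -> R) (Ts : R) : R :=
  Rintegral lebesgue_measure `[0, Ts] phi.

(* Main.v *)
Require Import Defs.
From HB Require Import structures.
From mathcomp Require Import all_boot all_order all_algebra.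
From mathcomp Require Import all_classical all_reals all_analysis.
From mathcomp Require Import ring lra measurable_realfun.
Import Order.TTheory GRing.Theory Num.Theory.
Import numFieldNormedType.Exports.
Local Open Scope classical_set_scope.
Local Open Scope ring_scope.

Section cov.
Context {R : realType}.
Local Notation mu := (@lebesgue_measure R).

Definition rfl (t : R) : measurableTypeR R -> measurableTypeR R := fun s => t - s.
Lemma refl_meas (t : R) : measurable_fun [set: measurableTypeR R] (rfl t).
Proof. apply: measurable_realfun.continuous_measurable_fun; by move=> x; apply: cvgB; [exact: cvg_cst | exact: cvg_id]. Qed.

Hint Extern 0 (measurable_fun _ (rfl _)) => solve [exact: refl_meas] : core.
Lemma lebesgue_measure_refl (t : R) (A : set R) : measurable A ->
  pushforward mu (rfl t) A = mu A.
Proof.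
move=> mA; apply/esym/lebesgue_measure_unique => //= _ [[a b]] _ <-.
rewrite /pushforward (_ : (rfl t) @^-1` `]a, b] = `[t - b, t - a[%classic); last first.
  apply/seteqP; split => s /=; rewrite !in_itv /= => /andP[h1 h2]; apply/andP; split.
  - by rewrite lerBlDr -lerBlDl.
  - by rewrite ltrBrDr -ltrBrDl.
  - by rewrite ltrBrDl -ltrBrDr.
  - by rewrite lerBlDl -lerBlDr.
rewrite !lebesgue_measure_itv /= !lte_fin ltrD2l ltrN2.
case: ifP => // _; rewrite -!EFinB; congr EFin; ring.
Qed.

Lemma refl_integral (t Ts : R) (f : R -> R) :
  measurable_fun setT f -> (forall u, 0 <= u <= Ts -> 0 <= f u) ->
  (\int[mu]_(u in `[0%R, Ts]) (f u)%:E = \int[mu]_(s in `[(t - Ts)%R, t]) (f (t - s)%R)%:E)%E.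
Proof.
move=> mf f0.
rewrite (_ : `[t - Ts, t]%classic = (rfl t) @^-1` `[0, Ts]); last first.
  apply/seteqP; split => s /=; rewrite !in_itv /= => /andP[h1 h2]; apply/andP; split.
  - by rewrite subr_ge0.
  - by rewrite lerBlDr -lerBlDl.
  - by rewrite lerBlDl -lerBlDr.
  - by rewrite -subr_ge0.
transitivity (\int[mu]_(x in rfl t @^-1` `[0%R, Ts]) ((EFin \o f) \o rfl t) x)%E; last by [].
rewrite -(ge0_integral_pushforward (refl_meas t))//=.
- by apply: eq_measure_integral => //= A mA AS; exact/esym/lebesgue_measure_refl.
- by apply/measurable_EFinP; exact: measurable_funS mf.
- by move=> u; rewrite inE /= in_itv /= => /f0; rewrite lee_fin.
Qed.
End cov.
Section aux.
Context {R : realType} {d : measure_display} {Om : measurableType d}.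
Variable (P : probability Om R).

Lemma cprobU (E1 E2 F : set Om) : measurable E1 -> measurable E2 -> measurable F ->
  E1 `&` E2 = set0 -> cprob P (E1 `|` E2) F = cprob P E1 F + cprob P E2 F.
Proof.
move=> m1 m2 mF E12; rewrite /cprob setIUl measureU; last 3 first.
- exact: measurableI.
- exact: measurableI.
- by rewrite setIACA E12 set0I.
rewrite fineD ?fin_num_measure//; last 2 first; try exact: measurableI.
by rewrite mulrDl.
Qed.

Lemma cprob_fine (E F : set Om) : 0 < fine (P F) ->
  fine (P (E `&` F)) = cprob P E F * fine (P F).
Proof. by move=> h; rewrite /cprob divfK // gt_eqF. Qed.

End aux.

Theorem mainTheorem2 (R : realType) (d : measure_display) (Om : measurableType d)
  (P : probability Om R) (T : Om -> R) (A : R -> set Om) (Rec : set Om)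
  (t Ts beta : R) (g phi : R -> R) :
  measurable_fun setT T -> (forall s, measurable (A s)) -> measurable Rec ->
  (0 < fine (P (A t)))%R ->
  0 < Ts ->
  is_cond_density P T A t g ->
  {for t, continuous g} ->
  is_recency_fn P T A t g Rec phi ->
  (* Adjusted Assumption 1 *)
  (forall u, Ts <= u -> phi u = beta) ->
  (* Adjusted Assumption 2 *)
  (forall u, 0 <= u <= Ts ->
     cond_density_le P T A t g (t - u) = cond_density_le P T A t g t) ->
  MDRI phi Ts - beta * Ts != 0 ->
  prevalence P T A t < 1 ->
  continuous (prevalence P T A) ->
  exists lam : R,
    is_incidence P T A t lam /\
    Prec P T A Rec t
      = (MDRI phi Ts - beta * Ts) * lam * (1 - prevalence P T A t)
        + prevalence P T A t * beta /\
    lam = (Prec P T A Rec t - beta * prevalence P T A t)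
          / ((1 - prevalence P T A t) * (MDRI phi Ts - beta * Ts)).
Proof.
move=> mT mA mRec Hpa Ts0 [g0 [mg [ig Hg]]] gc [mphi [phi01 Hphi]] A1 A2 Hne Hp1 _.
set p := prevalence P T A t.
set Om0 := MDRI phi Ts.
pose mu := @lebesgue_measure R.
pose G B := Rintegral mu B g.
pose F x := Rintegral mu `]-oo, x] g.
have mpre B : measurable B -> measurable (T @^-1` B).
  by move=> mB; rewrite -[X in measurable X]setTI; exact: mT.
have igS B : measurable B -> mu.-integrable B (EFin \o g).
  by move=> mB; exact: integrableS ig.
have Fp : p = F t by rewrite /p /prevalence Hg.
have G1 : G setT = 1.
  rewrite /G -Hg // preimage_setT /cprob setTI divff //; exact: lt0r_neq0.
have Gtoo : G `[t, +oo[%classic = 1 - p.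
  have := @Rintegral_itvB R g -oo%O +oo%O t (igS _ (measurable_itv _)) isT isT.
  rewrite set_itvNyy -/(G setT) G1 Rintegral_itv_obnd_cbnd; last exact: igS.
  by rewrite Fp.
have p1 : 0 < 1 - p by rewrite subr_gt0.
have tt1 : t < t + 1 by rewrite ltrDl.
have [dF Fd] := @continuous_FTC1 R g -oo%O t (t + 1) tt1
  (igS _ (measurable_itv _)) (ltNyr _) gc.
have cvF : (fun h => h^-1 * (F (h + t) - F t)) @ 0^' --> g t.
  have dF' : derivable F t 1 := dF.
  have Fd' : derive1 F t = g t := Fd.
  have e : (fun h : R => h^-1 *: ((F \o shift t) (h *: 1) - F t)) =
      (fun h => h^-1 * (F (h + t) - F t)).
    by apply/funext => h; rewrite /= -[h *: 1]/(h * 1) mulr1.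
  rewrite -Fd' /derive1 -e; exact: dF'.
set lam := g t / (1 - p).
have pge0 : 0 <= p by rewrite Fp; apply: Rintegral_ge0 => s _; exact: g0.
have key : Prec P T A Rec t = (Om0 - beta * Ts) * g t + p * beta.
  have [p0|pn0] := eqVneq p 0.
  - have gt0 : g t = 0.
      apply/eqP; rewrite eq_le g0 andbT.
      have cvL := cvg_dnbhs_at_left cvF.
      rewrite -(cvg_lim _ cvL)//; apply: limr_le.
        by apply/cvg_ex; eexists; exact: cvL.
      near=> h.
      have h0 : h < 0 by near: h; exact: nbhs_left_lt.
      rewrite -Fp p0 subr0; apply: mulr_le0_ge0.
        by rewrite invr_le0 ltW.
      by apply: Rintegral_ge0 => s _; exact: g0.
    have e1 : fine (P (T @^-1` `]-oo, t] `&` A t)) = 0.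
      by rewrite (cprob_fine _ _ _ Hpa); rewrite -/(prevalence P T A t) -/p p0 mul0r.
    have Pr0 : Prec P T A Rec t = 0.
      rewrite /Prec /cprob; apply/eqP; rewrite mulf_eq0; apply/orP; left.
      rewrite eq_le; apply/andP; split; last first.
        by apply: fine_ge0; exact: measure_ge0.
      rewrite -e1; apply: fine_le; rewrite ?fin_num_measure//.
      - by apply: measurableI; [apply: measurableI => //; exact: mpre|exact: mA].
      - by apply: measurableI; [exact: mpre|exact: mA].
      apply: le_measure; rewrite ?inE.
      - by apply: measurableI; [apply: measurableI => //; exact: mpre|exact: mA].
      - by apply: measurableI; [exact: mpre|exact: mA].
      by move=> w [[_ ?] ?].
    by rewrite Pr0 gt0 mulr0 p0 mul0r addr0.
  have ppos : 0 < p by rewrite lt0r pn0.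
  have gconst s : t - Ts <= s <= t -> g s = g t.
    move=> /andP[h1 h2].
    have := A2 (t - s); rewrite /cond_density_le subKr lexx h2 -/p.
    rewrite subr_ge0 h2 lerBlDr -lerBlDl h1 => /(_ isT) /(congr1 (fun x => x * p)).
    by rewrite !divfK // lt0r_neq0.
  have tTs : t - Ts < t by rewrite ltrBlDl ltrDr.
  have Eset : Rec `&` T @^-1` `]-oo, t] =
      (Rec `&` T @^-1` `]-oo, t - Ts[) `|` (Rec `&` T @^-1` `[t - Ts, t]).
    rewrite -setIUr -preimage_setU; congr (_ `&` _ @^-1` _).
    apply/seteqP; split => s /=; rewrite !in_itv /=.
    - move=> st; case: (ltP s (t - Ts)) => hs; [by left|right].
      by apply/andP; split.
    - case=> [hs|/andP[_ ->]] //.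
      by rewrite ltW // (lt_trans hs tTs).
  rewrite /Prec Eset cprobU; last 4 first.
  - by apply: measurableI => //; exact: mpre.
  - by apply: measurableI => //; exact: mpre.
  - exact: mA.
  - apply/seteqP; split => // w [[_ /=]]; rewrite !in_itv /= => h1 [_ /andP[h2 _]].
    by move: (lt_le_trans h1 h2); rewrite ltxx.
  rewrite !Hphi //; last 2 first.
  - by move=> s /=; rewrite !in_itv /= => /andP[].
  - by move=> s /=; rewrite !in_itv /= => hs; rewrite ltW // (lt_trans hs tTs).
  have I1 : \int[mu]_(s in `]-oo, t - Ts[) (phi (t - s) * g s) =
      \int[mu]_(s in `]-oo, t - Ts[) (beta * g s).
    apply: eq_Rintegral => s; rewrite inE /= in_itv /= => hs.
    by rewrite A1 // lerBrDl -lerBrDr ltW.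
  have I2 : \int[mu]_(s in `[t - Ts, t]) (phi (t - s) * g s) =
      \int[mu]_(s in `[t - Ts, t]) (phi (t - s) * g t).
    apply: eq_Rintegral => s; rewrite inE /= in_itv /= => hs.
    by rewrite gconst.
  have GTs : \int[mu]_(s in `[t - Ts, t]) g s = g t * Ts.
    have -> : \int[mu]_(s in `[t - Ts, t]) g s = \int[mu]_(s in `[t - Ts, t]) g t.
      by apply: eq_Rintegral => s; rewrite inE /= in_itv /= => hs; rewrite gconst.
    rewrite Rintegral_cst //; congr (_ * _); rewrite /mu /= lebesgue_measure_itv /= lte_fin tTs -EFinB /=.
    by rewrite opprB addrCA subrr addr0.
  have GB1 : \int[mu]_(s in `]-oo, t - Ts[) g s = p - g t * Ts.
    rewrite Rintegral_itv_bndo_bndc ?igS// -GTs -Rintegral_itv_obnd_cbnd ?igS//.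
    rewrite -(@Rintegral_itvB R g -oo%O (BRight t) (t - Ts)) ?igS// ?bnd_simp ?ltW//.
    by rewrite Fp /F opprB addrCA subrr addr0.
  have Iphi : mu.-integrable `[0, Ts] (EFin \o phi).
    apply: measurable_bounded_integrable => //.
    - by rewrite /mu /= lebesgue_measure_itv /= lte_fin Ts0 ltry.
    - exact: measurable_funS mphi.
    - exists 1; split => // M M1 s /=; rewrite in_itv /= => /andP[s0 _].
      have /andP[h1 h2] := phi01 s s0; rewrite ger0_norm //.
      exact: le_trans h2 (ltW M1).
  have I3 : \int[mu]_(s in `[t - Ts, t]) (phi (t - s) * g t) = Om0 * g t.
    rewrite /Om0 /MDRI -RintegralZr //.
    rewrite /Rintegral; congr fine.
    have := @refl_integral R t Ts (fun u => phi u * g t).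
    move=> /= -> //.
    - apply: measurable_funM => //; exact: measurable_cst.
    - by move=> u /andP[u0 _]; apply: mulr_ge0 => //; have /andP[] := phi01 u u0.
  rewrite I1 I2 I3 RintegralZl ?igS// GB1.
  ring.
exists lam; split; [|split].
- rewrite /is_incidence.
  have cvR := cvg_dnbhs_at_right cvF.
  have H : (fun h => h^-1 * (F (h + t) - F t) * (1 - p)^-1) @ 0^'+ --> lam.
    exact: cvgM cvR (cvg_cst _).
  apply: (cvg_trans _ H); apply: near_eq_cvg; near=> h.
  have h0 : 0 < h by near: h; exact: nbhs_right_gt.
  have GF : G `[t, t + h[%classic = F (h + t) - F t.
    rewrite /G Rintegral_itv_bndo_bndc ?igS// -Rintegral_itv_obnd_cbnd ?igS//.
    rewrite -(@Rintegral_itvB R g -oo%O (BRight (t+h)) t) ?igS// ?bnd_simp ?lerDl ?ltW//.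
    by rewrite /F (addrC t h).
  rewrite /G in GF Gtoo; apply/esym.
  rewrite /hazard_quot /cprob setIA -preimage_setI (@setIidl _ `[t, t + h[%classic); last first.
    by move=> s /=; rewrite !in_itv /= andbT => /andP[].
  rewrite !(cprob_fine _ _ _ Hpa) !Hg // GF Gtoo /=.
  field; apply/and3P; split; try exact: lt0r_neq0.
  
- rewrite key /lam; field; exact: lt0r_neq0.
- rewrite key /lam; field; apply/andP; split => //; exact: lt0r_neq0.
Unshelve. all: end_near. Qed.
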